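(* Let $n\ge 1$, $1\le d\le n$, and let $\mathcal{A}\subseteq\{0,1\}^n$ be nonempty. Then \[ A(n,d;\mathcal{A})\le \big(\mathrm{OPT}(\mathsf{Del}(n,d;\mathcal{A}))\big)^{1/2}. \]
   Context: Fourier transform: $\widehat{f}(\mathbf{s})=2^{-n}\sum_{\mathbf{x}\in\{0,1\}^n}f(\mathbf{x})(-1)^{\mathbf{x}\cdot\mathbf{s}}$. Convolution: $(f\star g)(\mathbf{x})=2^{-n}\sum_{\mathbf{z}\in\{0,1\}^n}f(\mathbf{z})g(\mathbf{x}+\mathbf{z})$, with addition over $\mathbb{F}_2^n$. $w(\mathbf{x})$ is the Hamming weight, $d(\cdot,\cdot)$ the Hamming distance; the minimum distance of a code (nonempty subset of $\{0,1\}^n$) is the minimum distance between distinct codewords (taken as $+\infty$ for a single codeword). $A(n,d;\mathcal{A})$ is the maximum of $|\mathcal{C}|$ over codes $\mathcal{C}\subseteq\mathcal{A}$ of minimum distance at least $d$. For an LP $\mathsf{L}$, $\mathrm{OPT}(\mathsf{L})$ is its optimal value. $\mathsf{Del}(n,d)$ is the LP: maximize $\sum_{\mathbf{x}}f(\mathbf{x})$ over $f:\{0,1\}^n\to\mathbb{R}$ subject to (C1) $f(\mathbf{x})\ge0$ for all $\mathbf{x}$; (C2) $\widehat f(\mathbf{s})\ge0$ for all $\mathbf{s}$; (C3) $f(\mathbf{x})=0$ whenever $1\le w(\mathbf{x})\le d-1$; (C4) $f(0^n)=1$. $\mathsf{Del}(n,d;\mathcal{A})$ is the LP: maximize $\sum_{\mathbf{x}}f(\mathbf{x})$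 over $f:\{0,1\}^n\to\mathbb{R}$ subject to (D1) $f(\mathbf{x})\ge 0$ for all $\mathbf{x}$; (D2) $\widehat f(\mathbf{s})\ge0$ for all $\mathbf{s}$; (D3) $f(\mathbf{x})=0$ whenever $1\le w(\mathbf{x})\le d-1$; (D4) $f(0^n)\le\mathrm{OPT}(\mathsf{Del}(n,d))$; (D5) $f(\mathbf{x})\le 2^n(\mathds{1}_{\mathcal{A}}\star\mathds{1}_{\mathcal{A}})(\mathbf{x})=\sum_{\mathbf{z}}\mathds{1}_{\mathcal{A}}(\mathbf{z})\mathds{1}_{\mathcal{A}}(\mathbf{x}+\mathbf{z})$ for all $\mathbf{x}$. *)

(* Defs.v *)
From HB Require Import structures.
From mathcomp Require Import all_boot all_order all_algebra.
From mathcomp Require Import classical_sets reals.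
Set Implicit Arguments. Unset Strict Implicit. Unset Printing Implicit Defensive.
Import Order.TTheory GRing.Theory Num.Theory.
Local Open Scope ring_scope.

Definition word (n : nat) := {ffun 'I_n -> bool}.

Definition wadd n (x y : word n) : word n := [ffun i => x i (+) y i].

Definition wzero n : word n := [ffun _ => false].

Definition wt n (x : word n) : nat := #|[pred i | x i]|.
Definition hdist n (x y : word n) : nat := wt (wadd x y).

Definition wdot n (x s : word n) : bool := odd #|[pred i | x i && s i]|.

Definition fourier (R : realType) n (f : word n -> R) (s : word n) : R :=
  (2 ^+ n)^-1 * \sum_(x : word n) f x * (-1) ^+ wdot x s.

Definition conv (R : realType) n (f g : word n -> R) (x : word n) : R :=
  (2 ^+ n)^-1 * \sum_(z : word n) f z * g (wadd x z).

Definition indic (R : realType) n (A : {set word n}) (x : word n) : R :=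
  (x \in A)%:R.

(* C has minimum distance at least d (vacuous for |C| <= 1, i.e. +oo) *)
Definition min_dist_ge n (C : {set word n}) (d : nat) : bool :=
  [forall x in C, forall y in C, (x != y) ==> (d <= hdist x y)%N].

Definition A_code n (d : nat) (A : {set word n}) : nat :=
  \max_(C : {set word n} | (C \subset A) && min_dist_ge C d) #|C|.

Definition OPT (R : realType) n (feas : (word n -> R) -> Prop) : R :=
  sup [set \sum_(x : word n) f x | f in feas].

Definition Del_feas (R : realType) n (d : nat) (f : word n -> R) : Prop :=
  [/\ (forall x, 0 <= f x),
      (forall s, 0 <= fourier f s),
      (forall x, (1 <= wt x)%N -> (wt x <= d - 1)%N -> f x = 0)
    & f (wzero n) = 1].

Definition OPT_Del (R : realType) n d : R := OPT (@Del_feas R n d).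

Definition DelA_feas (R : realType) n (d : nat) (A : {set word n})
    (f : word n -> R) : Prop :=
  [/\ (forall x, 0 <= f x),
      (forall s, 0 <= fourier f s),
      (forall x, (1 <= wt x)%N -> (wt x <= d - 1)%N -> f x = 0),
      f (wzero n) <= OPT_Del R n d
    & (forall x, f x <= 2 ^+ n * conv (indic R A) (indic R A) x)].

Definition OPT_DelA (R : realType) n d (A : {set word n}) : R :=
  OPT (@DelA_feas R n d A).

(* Main.v *)
Require Import Defs.
From HB Require Import structures.
From mathcomp Require Import all_boot all_order all_algebra.
From mathcomp Require Import classical_sets reals.
From mathcomp Require Import zify ring lra.
Set Implicit Arguments. Unset Strict Implicit. Unset Printing Implicit Defensive.
Import Order.TTheory GRing.Theory Num.Theory.
Local Open Scope ring_scope.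

Lemma wdotC n (x s : word n) : wdot x s = wdot s x.
Proof. by rewrite /wdot; congr odd; apply: eq_card => i; rewrite !inE andbC. Qed.

Lemma odd_card_xor (I : finType) (a b c : I -> bool) :
  odd #|[pred i | a i && (b i (+) c i)]| =
  odd #|[pred i | a i && b i]| (+) odd #|[pred i | a i && c i]|.
Proof.
have Ea := cardID [pred i | c i] [pred i | a i && b i].
have Eb := cardID [pred i | b i] [pred i | a i && c i].
have Ec := cardID [pred i | b i] [pred i | a i && (b i (+) c i)].
have E1 : #|[predI [pred i | a i && b i] & [pred i | c i]]| = #|[predI [pred i | a i && c i] & [pred i | b i]]|.
  by apply: eq_card => i; rewrite !inE; case: (a i); case: (b i); case: (c i).
have E2 : #|[predI [pred i | a i && (b i (+) c i)] & [pred i | b i]]| = #|[predD [pred i | a i && b i] & [pred i | c i]]|.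
  by apply: eq_card => i; rewrite !inE; case: (a i); case: (b i); case: (c i).
have E3 : #|[predD [pred i | a i && (b i (+) c i)] & [pred i | b i]]| = #|[predD [pred i | a i && c i] & [pred i | b i]]|.
  by apply: eq_card => i; rewrite !inE; case: (a i); case: (b i); case: (c i).
rewrite -Ea -Eb -Ec E1 E2 E3 !oddD.
by case: (odd #|[predI [pred i | a i && c i] & [pred i | b i]]|); case: (odd #|[predD [pred i | a i && b i] & [pred i | c i]]|); case: (odd #|[predD [pred i | a i && c i] & [pred i | b i]]|).
Qed.

Lemma wdotDr n (x s t : word n) : wdot x (wadd s t) = wdot x s (+) wdot x t.
Proof.
rewrite /wdot -odd_card_xor; congr odd; apply: eq_card => i; rewrite !inE /wadd ffunE //.
Qed.

Lemma card_word n : #|{: word n}| = (2 ^ n)%N.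
Proof. by rewrite card_ffun card_bool card_ord. Qed.

Lemma char_sum (R : numDomainType) n (x : word n) :
  \sum_(s : word n) (-1) ^+ wdot x s = if x == wzero n then (2 ^+ n) else 0 :> R.
Proof.
case: eqP => [->|/eqP hx].
  under eq_bigr => s _.
    have -> : wdot (wzero n) s = false.
      by rewrite /wdot (_ : #|_| = 0%N) //; apply: eq_card0 => i; rewrite !inE ffunE.
    rewrite expr0. over.
  by rewrite sumr_const card_word natrX.
have [i xi] : exists i, x i.
  apply/existsP; apply: contraR hx => /existsPn H; apply/eqP/ffunP => i.
  by rewrite ffunE; apply/negbTE/H.
pose e : word n := [ffun j => j == i].
have xe : wdot x e.
  rewrite /wdot (_ : #|_| = 1%N) //.
  rewrite -(card1 i); apply: eq_card => j; rewrite !inE ffunE.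
  by case: eqP => [->|]; rewrite ?xi ?andbF ?andbT.
have inj : injective (fun s => wadd s e).
  apply: (can_inj (g := fun s => wadd s e)) => s.
  by apply/ffunP => j; rewrite !ffunE -addbA addbb addbF.
set S := \sum_s _.
have : S = - S.
  rewrite {1}/S (reindex_inj inj) /= -sumrN; apply: eq_bigr => s _.
  by rewrite wdotDr xe; case: (wdot x s); rewrite /= ?expr1 ?expr0 ?opprK.
move/eqP; rewrite -addr_eq0 -mulr2n mulrn_eq0 /= => /eqP //.
Qed.

Lemma wdot0r n (x : word n) : wdot x (wzero n) = false.
Proof. by rewrite /wdot (_ : #|_| = 0%N) //; apply: eq_card0 => i; rewrite !inE ffunE andbF. Qed.

Lemma two_neq0 (R : realType) n : (2 ^+ n : R) != 0.
Proof. by rewrite expf_neq0 // pnatr_eq0. Qed.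

Lemma fourier_sum (R : realType) n (f : word n -> R) :
  \sum_s fourier f s = f (wzero n).
Proof.
rewrite /fourier -mulr_sumr exchange_big /=.
under eq_bigr do rewrite -mulr_sumr char_sum.
rewrite (bigD1 (wzero n)) //= eqxx big1 ?addr0.
  by rewrite mulrC -mulrA divff ?mulr1 // two_neq0.
by move=> x /negbTE ->; rewrite mulr0.
Qed.

Lemma sum_fourier0 (R : realType) n (f : word n -> R) :
  \sum_x f x = 2 ^+ n * fourier f (wzero n).
Proof.
rewrite /fourier mulrA divff ?two_neq0 // mul1r.
by apply: eq_bigr => x _; rewrite wdot0r mulr1.
Qed.

Lemma Del_bound (R : realType) n d (f : word n -> R) :
  @Del_feas R n d f -> \sum_x f x <= 2 ^+ n.
Proof.
case=> f0 hf _ h0.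
rewrite sum_fourier0 -{2}(mulr1 (2 ^+ n)) ler_wpM2l ?exprn_ge0 //.
rewrite -h0 -(fourier_sum f) (bigD1 (wzero n)) //= lerDl sumr_ge0 //.
Qed.

Lemma waddC n (x y : word n) : wadd x y = wadd y x.
Proof. by apply/ffunP => i; rewrite !ffunE addbC. Qed.
Lemma waddA n (x y z : word n) : wadd x (wadd y z) = wadd (wadd x y) z.
Proof. by apply/ffunP => i; rewrite !ffunE addbA. Qed.
Lemma waddxx n (x : word n) : wadd x x = wzero n.
Proof. by apply/ffunP => i; rewrite !ffunE addbb. Qed.
Lemma wadd0 n (x : word n) : wadd (wzero n) x = x.
Proof. by apply/ffunP => i; rewrite !ffunE. Qed.
Lemma wadd_eq n (x y z : word n) : (wadd x y == z) = (y == wadd z x).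
Proof.
apply/eqP/eqP => [<-|->]; first by rewrite waddC waddA waddxx wadd0.
by rewrite [wadd z x]waddC waddA waddxx wadd0.
Qed.

Lemma sum_delta (R : realType) (T : finType) (y : T) (h : T -> R) :
  \sum_x (y == x)%:R * h x = h y.
Proof.
rewrite (bigD1 y) //= eqxx mul1r big1 ?addr0 // => x /negbTE.
by rewrite eq_sym => ->; rewrite mul0r.
Qed.

Lemma sum_in_delta (R : realType) (T : finType) (C : {set T}) (y : T) :
  \sum_(c in C) (c == y)%:R = (y \in C)%:R :> R.
Proof.
case: (boolP (y \in C)) => yC.
  rewrite (bigD1 y) //= eqxx big1 ?addr0 // => x /andP[_ /negbTE ->] //.
by rewrite big1 // => x xC; case: eqP => // exy; rewrite -exy xC in yC.
Qed.

Definition g (R : realType) n (C : {set word n}) (x : word n) : R := \sum_(c in C) \sum_(c' in C) (wadd c c' == x)%:R.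

Lemma g_inner (R : realType) (n : nat) (C : {set word n}) x : (g R C) x = \sum_(c in C) (wadd x c \in C)%:R.
Proof. by apply: eq_bigr => c _; rewrite -sum_in_delta; apply: eq_bigr => c' _; rewrite wadd_eq. Qed.

Lemma g_ge0 (R : realType) (n : nat) (C : {set word n}) x : 0 <= (g R C) x.
Proof. by rewrite /g; do 2! (apply: sumr_ge0 => ? _); rewrite ler0n. Qed.

Lemma g_sum (R : realType) (n : nat) (C : {set word n}) : \sum_x (g R C) x = (#|C| ^ 2)%:R.
Proof.
rewrite /g exchange_big /=.
under eq_bigr do rewrite exchange_big /=.
have D y : \sum_x (y == x)%:R = 1 :> R.
  by rewrite -[RHS](sum_delta y (fun _ => 1)); apply: eq_bigr => *; rewrite mulr1.
rewrite (eq_bigr (fun _ => #|C|%:R)) => [|i _]; last first.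
  by rewrite (eq_bigr (fun _ => 1)) ?sumr_const // => j _; rewrite D.
by rewrite sumr_const expnS expn1 natrM mulr_natr.
Qed.

Lemma g0 (R : realType) (n : nat) (C : {set word n}) : (g R C) (wzero n) = #|C|%:R.
Proof.
rewrite g_inner (eq_bigr (fun _ => 1)) ?sumr_const //.
by move=> c cC; rewrite wadd0 cC.
Qed.

Lemma sgn_xor (R : realType) (a b : bool) : (-1) ^+ (a (+) b) = (-1) ^+ a * (-1) ^+ b :> R.
Proof. by case: a; case: b; rewrite /= ?expr0 ?expr1 ?mulr1 ?mul1r ?mulrNN ?mulr1. Qed.

Lemma g_fourier (R : realType) (n : nat) (C : {set word n}) s : fourier (g R C) s = (2 ^+ n)^-1 * (\sum_(c in C) (-1) ^+ wdot c s) ^+ 2.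
Proof.
rewrite /fourier; congr (_ * _).
transitivity (\sum_(c in C) \sum_(c' in C) (-1) ^+ wdot (wadd c c') s :> R).
  rewrite (eq_bigr (fun x => \sum_(c in C) \sum_(c' in C) (wadd c c' == x)%:R * (-1) ^+ wdot x s)); last first.
    by move=> x _; rewrite /g mulr_suml; apply: eq_bigr => c _; rewrite mulr_suml.
  rewrite exchange_big; apply: eq_bigr => c _ /=.
  rewrite exchange_big; apply: eq_bigr => c' _ /=.
  exact: sum_delta.
rewrite expr2 mulr_suml; apply: eq_bigr => c _; rewrite mulr_sumr; apply: eq_bigr => c' _.
by rewrite wdotC wdotDr sgn_xor wdotC [wdot s c']wdotC.
Qed.

Lemma g_fourier_ge0 (R : realType) (n : nat) (C : {set word n}) s : 0 <= fourier (g R C) s.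
Proof. by rewrite g_fourier mulr_ge0 ?sqr_ge0 // invr_ge0 exprn_ge0. Qed.

Lemma g_D3 (R : realType) (n : nat) (C : {set word n}) d x : min_dist_ge C d -> (1 <= d)%N ->
  (1 <= wt x)%N -> (wt x <= d - 1)%N -> (g R C) x = 0.
Proof.
move=> /forallP hC hd h1 h2; rewrite /g big1 // => c cC; rewrite big1 // => c' c'C.
case: eqP => // ex; exfalso.
case: (eqVneq c c') => [ecc|ne].
  by move: h1; rewrite -ex ecc waddxx /wt (_ : #|_| = 0%N) //; apply: eq_card0 => i; rewrite !inE ffunE.
have := hC c; rewrite cC /= => /forallP /(_ c'); rewrite c'C ne /= /hdist ex.
move: h2 hd; lia.
Qed.

Lemma g_D5 (R : realType) (n : nat) (C : {set word n}) (A : {set word n}) x : C \subset A -> (g R C) x <= 2 ^+ n * conv (indic R A) (indic R A) x.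
Proof.
move=> /fintype.subsetP sCA.
rewrite /conv mulrA divff ?two_neq0 // mul1r g_inner big_mkcond /=.
apply: ler_sum => z _; rewrite /indic.
case: (boolP (z \in C)) => zC; last by rewrite mulr_ge0 ?ler0n.
rewrite (sCA z zC) mul1r; case: (boolP (wadd x z \in C)) => h; last by rewrite ler0n.
by rewrite (sCA _ h).
Qed.

Lemma fourierZ (R : realType) (n : nat) (k : R) (f : word n -> R) s : fourier (fun x => k * f x) s = k * fourier f s.
Proof.
rewrite /fourier mulrCA; congr (_ * _); rewrite mulr_sumr; apply: eq_bigr => x _.
by rewrite mulrA.
Qed.

Lemma f_Del (R : realType) (n : nat) (C : {set word n}) d : min_dist_ge C d -> (1 <= d)%N -> (0 < #|C|)%N ->
  @Del_feas R n d (fun x => (#|C|%:R)^-1 * (g R C) x).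
Proof.
move=> hC hd hM.
have M0 : (#|C|%:R : R) != 0 by rewrite pnatr_eq0 -lt0n.
split.
- by move=> x; rewrite mulr_ge0 ?g_ge0 // invr_ge0 ler0n.
- by move=> s; rewrite fourierZ mulr_ge0 ?g_fourier_ge0 // invr_ge0 ler0n.
- by move=> x h1 h2; rewrite (g_D3 R hC hd h1 h2) mulr0.
- by rewrite g0 mulVf.
Qed.

Lemma f_sum (R : realType) (n : nat) (C : {set word n}) : (0 < #|C|)%N -> \sum_x (#|C|%:R)^-1 * (g R C) x = #|C|%:R :> R.
Proof.
move=> hM; have M0 : (#|C|%:R : R) != 0 by rewrite pnatr_eq0 -lt0n.
by rewrite -mulr_sumr g_sum natrX expr2 mulrA mulVf ?mul1r.
Qed.


Unset Implicit Arguments.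
Theorem mainTheorem2 (R : realType) (n d : nat) (A : {set word n}) :
  (1 <= n)%N -> (1 <= d)%N -> (d <= n)%N -> A != finset.set0 ->
  (A_code d A)%:R <= Num.sqrt (OPT_DelA R d A).
Proof.
move=> hn hd hdn hA.
have hpos : (0 < #|[pred C : {set word n} | (C \subset A) && min_dist_ge C d]|)%N.
  apply/card_gt0P; exists finset.set0; rewrite inE finset.sub0set /=.
  by apply/forallP => x; rewrite finset.in_set0.
have [C0 HC0 E] := @eq_bigmax_cond _ [pred C : {set word n} | (C \subset A) && min_dist_ge C d] (fun C => #|C|) hpos.
rewrite (_ : A_code d A = #|C0|); last exact: E.
move: HC0; rewrite inE => /andP[sCA hC].
case: (posnP #|C0|) => [->|hM]; first by rewrite sqrtr_ge0.
set M := #|C0|.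
have hDel : (M%:R : R) <= OPT_Del R n d.
  have := @ub_le_sup R [set \sum_x f x | f in @Del_feas R n d].
  apply.
    exists (2 ^+ n) => y [f Hf <-]; exact: Del_bound Hf.
  exists (fun x => (M%:R)^-1 * g R C0 x); first exact: f_Del.
  exact: f_sum.
have hDelA : (M%:R ^+ 2 : R) <= OPT_DelA R d A.
  have := @ub_le_sup R [set \sum_x f x | f in @DelA_feas R n d A].
  apply.
    exists (\sum_x 2 ^+ n * conv (indic R A) (indic R A) x) => y [f Hf <-].
    by case: Hf => _ _ _ _ h5; apply: ler_sum => x _; apply: h5.
  exists (g R C0); last by rewrite g_sum natrX.
  split.
  - exact: g_ge0.
  - exact: g_fourier_ge0.
  - by move=> x; apply: g_D3.
  - by rewrite g0.
  - by move=> x; apply: g_D5.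
rewrite -(ger0_norm (ler0n R M)) -sqrtr_sqr ler_sqrt //.
by apply: le_trans hDelA; apply: sqr_ge0.
Qed.
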